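(* Let $(X,\Sigma)$ be a measurable space, let $\boldsymbol{\mu}=(\mu_t)_{t\in[0,\infty)}$ be a family of monotone measures on $\Sigma$, let $(\mathcal{E}_t)_{t\ge 0}$ be a process of pavings and let $\mathscr{A}=\{\mathsf{A}_t(\cdot|E)\colon E\in\mathcal{E}_t,\,t\ge 0\}$ be a parametric family of conditional aggregation operators. Suppose that $\boldsymbol{\mu}$ is nonincreasing and $\mathscr{A}$ is nonincreasing. Then for every fixed $f\in\mathbf{F}$ the function $[0,\infty)\ni t\mapsto \boldsymbol{\mu}_{\mathscr{A}}(f,t)$ is nonincreasing.
   Context: $\Sigma^0=\Sigma\setminus\{\emptyset\}$. $\mathbf{F}$ denotes the set of all $\Sigma$-measurable, nonnegative, bounded functions $f\colon X\to[0,\infty)$. A monotone measure is a map $\mu\colon\Sigma\to[0,\infty]$ with $\mu(B)\le\mu(C)$ whenever $B\subseteq C$, $\mu(\emptyset)=0$ and $\mu(X)>0$. For $E\in\Sigma^0$, a conditional aggregation operator (CAO) w.r.t. $E$ is a map $\mathsf{A}(\cdot|E)\colon\mathbf{F}\to[0,\infty]$ such that (C1) $\mathsf{A}(f|E)\le\mathsf{A}(g|E)$ whenever $f(x)\le g(x)$ for all $x\in E$, and (C2) $\mathsf{A}(\mathbf{1}_{X\setminus E}|E)=0$. A process of pavings is a family $(\mathcal{E}_t)_{t\ge0}$ with $\emptyset\in\mathcal{E}_t\subseteq\Sigma$ for all $t$; $\mathcal{E}_t^0=\mathcal{E}_t\setminus\{\emptyset\}$. A parametric family of CAOs (pFCA)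 $\{\mathsf{A}_t(\cdot|E)\colon E\in\mathcal{E}_t,\,t\ge0\}$ consists of CAOs $\mathsf{A}_t(\cdot|E)$ w.r.t. $E$ for each $t$ and $E\in\mathcal{E}_t^0$, with the convention $\mathsf{A}_t(\cdot|\emptyset)=\infty$. The generalized level measure is $\boldsymbol{\mu}_{\mathscr{A}}(f,t)=\sup\{\mu_t(E)\colon \mathsf{A}_t(f|E)\ge t,\ E\in\mathcal{E}_t\}$ for $t\ge0$. The family $\boldsymbol{\mu}$ is nonincreasing if $\mu_s(E)\ge\mu_t(E)$ for all $E\in\Sigma$ and all $s<t$. The pFCA is nonincreasing if $\mathcal{E}_t\subseteq\mathcal{E}_s$ and $\mathsf{A}_s(f|E)\ge\mathsf{A}_t(f|E)$ for all $f\in\mathbf{F}$, all $E\in\mathcal{E}_t^0$ and all $0\le s<t$. *)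

(* Defs.v *)
From HB Require Import structures.
From mathcomp Require Import all_boot all_order all_algebra.
From mathcomp Require Import all_classical all_reals.
From mathcomp Require Import ereal numfun measure lebesgue_measure.
Set Implicit Arguments. Unset Strict Implicit. Unset Printing Implicit Defensive.
Import Order.TTheory GRing.Theory Num.Theory.
Local Open Scope classical_set_scope.
Local Open Scope ring_scope.
Local Open Scope ereal_scope.

Section Defs.
Context {d : measure_display} {T : measurableType d} {R : realType}.

Definition Fset (f : T -> R) : Prop :=
  measurable_fun setT f /\ (forall x, (0 <= f x)%R) /\
  exists M : R, forall x, (f x <= M)%R.

Definition monotone_measure (mu : set T -> \bar R) : Prop :=
  (forall B, measurable B -> 0 <= mu B) /\
  (forall B C, measurable B -> measurable C -> B `<=` C -> mu B <= mu C) /\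
  mu set0 = 0 /\ 0 < mu setT.

Definition CAO (E : set T) (A : (T -> R) -> \bar R) : Prop :=
  (forall f, Fset f -> 0 <= A f) /\
  (forall f g, Fset f -> Fset g -> (forall x, E x -> (f x <= g x)%R) ->
     A f <= A g) /\
  A (\1_(~` E)) = 0.

Definition paving_process (Ec : R -> set (set T)) : Prop :=
  forall t, (0 <= t)%R -> Ec t set0 /\ Ec t `<=` measurable.

Definition pFCA (Ec : R -> set (set T)) (A : R -> set T -> (T -> R) -> \bar R)
  : Prop :=
  (forall t E, (0 <= t)%R -> Ec t E -> E <> set0 -> CAO E (A t E)) /\
  (forall t f, A t set0 f = +oo).

Definition gen_level_measure (mu : R -> set T -> \bar R)
  (Ec : R -> set (set T)) (A : R -> set T -> (T -> R) -> \bar R)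
  (f : T -> R) (t : R) : \bar R :=
  ereal_sup [set mu t E | E in [set E | Ec t E /\ t%:E <= A t E f]].

Definition mu_nonincreasing (mu : R -> set T -> \bar R) : Prop :=
  forall E s t, measurable E -> (0 <= s)%R -> (s < t)%R -> mu t E <= mu s E.

Definition pFCA_nonincreasing (Ec : R -> set (set T))
  (A : R -> set T -> (T -> R) -> \bar R) : Prop :=
  forall s t, (0 <= s)%R -> (s < t)%R ->
    Ec t `<=` Ec s /\
    (forall f E, Fset f -> Ec t E -> E <> set0 -> A t E f <= A s E f).

End Defs.

(* Main.v *)
Require Import Defs.
From HB Require Import structures.
From mathcomp Require Import all_boot all_order all_algebra.
From mathcomp Require Import all_classical all_reals.
From mathcomp Require Import ereal numfun measure lebesgue_measure.
Import Order.TTheory GRing.Theory Num.Theory.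
Local Open Scope classical_set_scope.
Local Open Scope ring_scope.
Local Open Scope ereal_scope.

Theorem proposition3p4 (d : measure_display) (T : measurableType d)
  (R : realType) (mu : R -> set T -> \bar R) (Ec : R -> set (set T))
  (A : R -> set T -> (T -> R) -> \bar R) :
  (forall t, (0 <= t)%R -> monotone_measure (mu t)) ->
  paving_process Ec ->
  pFCA Ec A ->
  mu_nonincreasing mu ->
  pFCA_nonincreasing Ec A ->
  forall f : T -> R, Fset f ->
  forall s t : R, (0 <= s)%R -> (s <= t)%R ->
    gen_level_measure mu Ec A f t <= gen_level_measure mu Ec A f s.
Proof.
move=> _ Hpav [_ Hemp] Hmu HA f Hf s t s0 st.
case: (boolP (s == t)%R) => [/eqP -> //|nst].
have lst : (s < t)%R by rewrite lt_neqAle nst st.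
have t0 : (0 <= t)%R by apply: le_trans st.
rewrite /gen_level_measure; apply: ub_ereal_sup => _ [E [EtE HtE] <-].
have [sub HAst] := HA s t s0 lst.
have mE : measurable E by apply: (proj2 (Hpav t t0)).
apply: le_trans (Hmu E s t mE s0 lst) _.
apply: ereal_sup_ubound; exists E => //; split; first exact: sub.
have [->|nE] := eqVneq E set0; first by rewrite Hemp leey.
apply: le_trans (HAst f E Hf EtE (elimN eqP nE)).
by apply: le_trans HtE; rewrite lee_fin ltW.
Qed.
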